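(* Let $U_1,\ldots,U_K$ be mutually commuting unitary operators on a Hilbert space $\mathcal{H}_Q$ of finite dimension $D_Q$, and let $\{|\alpha_k\rangle\}_{k=1}^{D_Q}$ be an orthonormal basis of $\mathcal{H}_Q$ consisting of common eigenvectors of all the $U_j$. If $U_1,\ldots,U_K$ are unambiguously distinguishable, then for every state of the form $|\xi\rangle=\sum_{k=1}^{D_Q}\sqrt{p_k}\,e^{i\theta_k}|\alpha_k\rangle$ with all $p_k>0$, $\sum_k p_k=1$ and real $\theta_k$, the vectors $U_1|\xi\rangle,\ldots,U_K|\xi\rangle$ are linearly independent (so the $U_j$ can be unambiguously discriminated using the probe $|\xi\rangle$ without any ancilla).
   Context: A finite list of unitary operators $U_1,\ldots,U_K$ on a finite-dimensional Hilbert space $\mathcal{H}_Q$ is called unambiguously distinguishable if there exist a finite-dimensional Hilbert space $\mathcal{H}_A$ (an ancilla) and a unit vector $|\psi\rangle\in\mathcal{H}_Q\otimes\mathcal{H}_A$ such that the $K$ output vectors $(U_j\otimes\mathbb{1}_A)|\psi\rangle$ are linearly independent. *)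

(* Defs.v *)
From HB Require Import structures.
From mathcomp Require Import all_boot all_order all_algebra.
From mathcomp Require Import complex mxtens.
From mathcomp Require Import reals trigo.
Set Implicit Arguments. Unset Strict Implicit. Unset Printing Implicit Defensive.
Import Order.TTheory GRing.Theory Num.Theory.
Local Open Scope ring_scope.
Local Open Scope complex_scope.

(* States of a Hilbert space of dimension n: column vectors in C^n, C = R[i]. *)

Definition adjmx (R : rcfType) m n (A : 'M[R[i]]_(m, n)) : 'M[R[i]]_(n, m) :=
  map_mx (fun z => z^*) A^T.

Definition inner (R : rcfType) n (u v : 'cV[R[i]]_n) : R[i] :=
  \sum_(i < n) (u i 0)^* * v i 0.

Definition unitary (R : rcfType) n (U : 'M[R[i]]_n) : Prop :=
  adjmx U *m U = 1%:M /\ U *m adjmx U = 1%:M.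

Definition lin_indep (R : rcfType) n K (v : 'I_K -> 'cV[R[i]]_n) : Prop :=
  row_free (\matrix_(j < K) (v j)^T).

Definition unamb_distinguishable (R : rcfType) DQ K (U : 'I_K -> 'M[R[i]]_DQ)
  : Prop :=
  exists (dA : nat) (psi : 'cV[R[i]]_(DQ * dA)),
    inner psi psi = 1 /\
    lin_indep (fun j => (U j *t (1%:M : 'M[R[i]]_dA)) *m psi).

Definition expi (R : realType) (t : R) : R[i] := cos t +i* sin t.

(* Main.v *)
Require Import Defs.
From HB Require Import structures.
From mathcomp Require Import all_boot all_order all_algebra.
From mathcomp Require Import complex mxtens.
From mathcomp Require Import reals trigo.
Import Order.TTheory GRing.Theory Num.Theory.
Local Open Scope ring_scope.
Local Open Scope complex_scope.

Lemma rowmx_mul (T : fieldType) n K (v : 'I_K -> 'cV[T]_n) (c : 'rV_K) :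
  c *m \matrix_(j < K) (v j)^T = (\sum_j c 0 j *: v j)^T.
Proof.
apply/matrixP => i k; rewrite !mxE summxE; apply: eq_bigr => j _.
by rewrite !mxE (ord1 i).
Qed.

Lemma expi_neq0 (R : realType) (t : R) : expi t != 0.
Proof.
apply/negP => /eqP [] hc hs.
have := cos2Dsin2 t; rewrite hc hs expr0n /= addr0 => /eqP.
by rewrite eq_sym oner_eq0.
Qed.

Theorem corollary2 (R : realType) (DQ K : nat)
  (U : 'I_K -> 'M[R[i]]_DQ)
  (alpha : 'I_DQ -> 'cV[R[i]]_DQ) :
  (forall j, unitary (U j)) ->
  (forall j l, U j *m U l = U l *m U j) ->
  (forall k l, inner (alpha k) (alpha l) = (k == l)%:R) ->
  (forall j k, exists lam : R[i], U j *m alpha k = lam *: alpha k) ->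
  unamb_distinguishable U ->
  forall (p theta : 'I_DQ -> R),
    (forall k, 0 < p k) ->
    \sum_(k < DQ) p k = 1 ->
    let xi := \sum_(k < DQ) (((Num.sqrt (p k))%:C * expi (theta k)) *: alpha k) in
    lin_indep (fun j => U j *m xi).
Proof.
move=> _ _ Hon Heig [dA [psi [_ Hpsi]]] p theta Hp _ xi.
rewrite /lin_indep in Hpsi.
have [lam Hlam] : exists lam : 'I_K -> 'I_DQ -> R[i],
    forall j k, U j *m alpha k = lam j k *: alpha k.
  have H1 : forall j, exists f : 'I_DQ -> R[i], forall k, U j *m alpha k = f k *: alpha k.
    by move=> j; apply: (@fin_all_exists _ (fun _ => R[i]) (fun k l => U j *m alpha k = l *: alpha k)) => k; exact: Heig.
  exact: (@fin_all_exists _ (fun _ => 'I_DQ -> R[i]) _ H1).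
apply: inj_row_free => c Hc.
rewrite rowmx_mul in Hc.
pose W := \sum_j c 0 j *: U j.
have HW : W *m xi = 0.
  have := congr1 trmx Hc; rewrite trmxK trmx0 => <-.
  rewrite /W mulmx_suml; apply: eq_bigr => j _; by rewrite scalemxAl.
pose A : 'M[R[i]]_DQ := \matrix_(i, k) alpha k i 0.
have HA : adjmx A *m A = 1%:M.
  apply/matrixP => l k; rewrite !mxE -Hon /inner; apply: eq_bigr => i _.
  by rewrite !mxE.
have HA' : A *m adjmx A = 1%:M by apply: mulmx1C.
pose coef k := (Num.sqrt (p k))%:C * expi (theta k).
have Hxi : xi = A *m \col_k coef k.
  apply/matrixP => i z; rewrite /xi !mxE summxE; apply: eq_bigr => k _.
  by rewrite !mxE (ord1 z) mulrC.
pose mu : 'rV[R[i]]_DQ := \row_k \sum_j c 0 j * lam j k.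
have HWa k : W *m alpha k = mu 0 k *: alpha k.
  rewrite /W mulmx_suml.
  under eq_bigr do rewrite -scalemxAl Hlam scalerA.
  by rewrite -scaler_suml mxE.
have HWA : W *m A = A *m diag_mx mu.
  apply/matrixP => i k; rewrite mul_mx_diag mxE.
  transitivity ((W *m alpha k) i 0).
    by rewrite !mxE; apply: eq_bigr => l _; rewrite !mxE.
  by rewrite HWa !mxE mulrC.
have Hmu : mu = 0.
  have H0 : diag_mx mu *m \col_k coef k = 0.
    have := congr1 (mulmx (adjmx A)) HW.
    by rewrite Hxi (mulmxA W) HWA -(mulmxA A (diag_mx mu)) (mulmxA (adjmx A)) HA mul1mx mulmx0.
  apply/matrixP => z k; rewrite (ord1 z) mxE.
  have := congr1 (fun M : 'cV[R[i]]_DQ => M k 0) H0; rewrite mul_diag_mx !mxE => /eqP.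
  rewrite mulf_eq0 => /orP [/eqP // | ].
  rewrite mulf_eq0 => /orP [] /eqP.
  - case=> h.
    by move: (sqrtr_gt0 (p k)); rewrite Hp h ltxx.
  - by move/eqP; rewrite (negPf (@expi_neq0 R (theta k))).
have HW0 : W = 0.
  rewrite -[W]mulmx1 -HA' mulmxA HWA Hmu.
  have -> : diag_mx (0 : 'rV[R[i]]_DQ) = 0 by apply/matrixP => i k; rewrite !mxE mul0rn.
  by rewrite mulmx0 mul0mx.
have := row_free_inj Hpsi (x1:=c) (x2:=0).
rewrite mul0mx; apply.
rewrite rowmx_mul.
have -> : \sum_j c 0 j *: ((U j *t (1%:M : 'M[R[i]]_dA)) *m psi)
          = (W *t (1%:M : 'M[R[i]]_dA)) *m psi.
  under eq_bigr do rewrite scalemxAl.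
  rewrite -mulmx_suml; congr (_ *m _).
  apply/matrixP => i k; rewrite mxE summxE /W summxE mulr_suml; apply: eq_bigr => j _.
  by rewrite !mxE mulrA.
by rewrite HW0 tens0mx mul0mx trmx0.
Qed.
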